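(* Let $X$ have the standard Cauchy distribution. Then the distribution function $F(x)=\frac{2}{\pi}\arctan(x)$, $x\ge0$, of $|X|$ satisfies $F\in\mathcal{S}_C$ but $F\notin\mathcal{S}_F$.
   Context: For a distribution function $G$, $G^{-1}(u)=\inf\{x\in\mathbb{R}:G(x)\ge u\}$ for $0<u<1$. For distribution functions $F,G$, write $F\le_{skew}G$ if the function $x\mapsto G^{-1}(F(x))$ is convex (on the set of $x$ with $0<F(x)<1$). For a distribution function $F$, $\mathcal{S}(F)=\{G: F\le_{skew}G\}$. Set $\mathcal{S}_F=\mathcal{S}(F_F)$ with $F_F(x)=e^{-1/x}$, $x>0$ (standard Fréchet), and $\mathcal{S}_C=\mathcal{S}(F_C)$ with $F_C(x)=\frac1\pi\arctan(x)+\frac12$, $x\in\mathbb{R}$ (Cauchy). *)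

(* Defs.v *)
From HB Require Import structures.
From mathcomp Require Import all_boot all_order all_algebra.
From mathcomp Require Import all_classical all_reals all_analysis.
Set Implicit Arguments. Unset Strict Implicit. Unset Printing Implicit Defensive.
Import Order.TTheory GRing.Theory Num.Theory numFieldNormedType.Exports.
Local Open Scope classical_set_scope.
Local Open Scope ring_scope.

Section Defs.
Variable R : realType.

Definition distribution_function (G : R -> R) : Prop :=
  [/\ {homo G : x y / x <= y},
      (forall x : R, G @ x^'+ --> G x),
      G x @[x --> -oo] --> (0 : R) &
      G x @[x --> +oo] --> (1 : R)].

Definition ginv (G : R -> R) (u : R) : R := inf [set x | u <= G x].

Definition skew_le (F G : R -> R) : Prop :=
  forall x y t : R,
    0 < F x < 1 -> 0 < F y < 1 -> 0 <= t <= 1 ->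
    0 < F (t * x + (1 - t) * y) < 1 ->
    ginv G (F (t * x + (1 - t) * y))
      <= t * ginv G (F x) + (1 - t) * ginv G (F y).

Definition skew_class (F : R -> R) : set (R -> R) :=
  [set G | distribution_function G /\ skew_le F G].

Definition F_Frechet (x : R) : R := if 0 < x then expR (- x^-1) else 0.

Definition F_Cauchy (x : R) : R := pi^-1 * atan x + 2^-1.

Definition S_F : set (R -> R) := skew_class F_Frechet.
Definition S_C : set (R -> R) := skew_class F_Cauchy.

Definition F_absCauchy (x : R) : R := if 0 <= x then 2 / pi * atan x else 0.

End Defs.

(* Main.v *)
Require Import Defs.
From HB Require Import structures.
From mathcomp Require Import all_boot all_order all_algebra.
From mathcomp Require Import all_classical all_reals all_analysis.
From mathcomp Require Import ring lra.
Set Implicit Arguments. Unset Strict Implicit. Unset Printing Implicit Defensive.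
Import Order.TTheory GRing.Theory Num.Theory numFieldNormedType.Exports.
Local Open Scope classical_set_scope.
Local Open Scope ring_scope.

Section S.
Variable R : realType.

Lemma pi2_gt0 : 0 < pi / 2 :> R.
Proof. by rewrite divr_gt0 ?pi_gt0. Qed.

Lemma FabsC_pos (x : R) : 0 <= x -> F_absCauchy x = 2 / pi * atan x.
Proof. by rewrite /F_absCauchy => ->. Qed.

Lemma ginv_min (G : R -> R) u x0 : u <= G x0 ->
  (forall x, u <= G x -> x0 <= x) -> ginv G u = x0.
Proof.
move=> h0 hl; rewrite /ginv; apply/eqP; rewrite eq_le; apply/andP; split.
  by apply: ge_inf => //; exists x0 => y /hl.
by apply: lb_le_inf; [exists x0|move=> y /hl].
Qed.

Lemma ginvF u : 0 < u < 1 -> ginv (@F_absCauchy R) u = tan (u * (pi / 2)).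
Proof.
move=> /andP[u0 u1].
have pi0 := @pi_gt0 R.
set a := u * (pi / 2).
have aI : - (pi / 2) < a < pi / 2.
  apply/andP; split.
    by apply: lt_trans (_ : 0 < a); rewrite ?oppr_lt0 ?pi2_gt0 // mulr_gt0 // pi2_gt0.
  by rewrite /a gtr_pMl // pi2_gt0.
have a0 : 0 < a by rewrite mulr_gt0 // pi2_gt0.
have t0 : 0 < tan a.
  rewrite /tan divr_gt0 //; last exact: cos_gt0_pihalf.
  by apply: sin_gt0_pihalf; rewrite a0 /=; case/andP: aI.
have Fa : F_absCauchy (tan a) = u.
  rewrite FabsC_pos ?ltW // tanK; last by rewrite in_itv /=.
  rewrite /a; move: (pi : R) pi0 => p p0; field; exact: lt0r_neq0.
apply: ginv_min; first by rewrite Fa.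
move=> x; rewrite -{1}Fa; case: (leP 0 x) => x0.
  rewrite (FabsC_pos (ltW t0)) (FabsC_pos x0) ler_pM2l ?divr_gt0 //.
  move=> h; rewrite leNgt; apply/negP => hx; have := lt_atan hx; lra.
rewrite /F_absCauchy (ltW t0) (leNgt 0 x) x0 /= => h; exfalso.
have : 0 < 2 / pi * atan (tan a) by rewrite mulr_gt0 ?divr_gt0 // tanK ?in_itv //.
lra.
Qed.
Lemma tan_facts : let p := tan (3^-1 * (pi / 2)) : R in
  0 < p /\ p ^+ 2 = 3^-1 /\ tan (2 / 3 * (pi / 2) : R) = 3 * p /\
  tan (2^-1 * (pi / 2)) = 1 :> R.
Proof.
have pi0 := @pi_gt0 R.
set b := 3^-1 * (pi / 2).
have b0 : 0 < b by rewrite mulr_gt0 ?invr_gt0 ?pi2_gt0.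
have bI : - (pi / 2) < b < pi / 2.
  apply/andP; split; first by apply: lt_trans (_ : 0 < b); rewrite ?oppr_lt0 ?pi2_gt0.
  rewrite /b; move: (pi/2) pi2_gt0 => q q0; lra.
have c0 : 0 < cos b by exact: cos_gt0_pihalf.
have e1 : b + b = - b + pi / 2 by rewrite /b; move: (pi/2) => q; field.
have hs : sin (b + b) = cos b by rewrite e1 sinDpihalf cosN.
rewrite sinD in hs.
have s2 : sin b = 2^-1.
  have : cos b * (2 * sin b - 1) = 0.
    have -> : cos b * (2 * sin b - 1) = sin b * cos b + cos b * sin b - cos b by ring.
    by rewrite hs subrr.
  move/eqP; rewrite mulf_eq0 (gt_eqF c0) /= subr_eq0 => /eqP h.
  lra.
have cc := cos2Dsin2 b; rewrite s2 in cc.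
have e2 : 2 / 3 * (pi / 2) = b + b by rewrite /b; move: (pi/2) => q; field.
have e3 : 2^-1 * (pi / 2) = pi / 4 :> R by move: (pi : R) => q; field.
rewrite /= e2 e3 tan_piquarter.
have cn : cos b != 0 by rewrite gt_eqF.
have cb2 : cos b ^+ 2 = 3 / 4 by lra.
have cB : cos (b + b) = 2^-1.
  rewrite cosD s2; have -> : cos b * cos b = 3 / 4 by rewrite -expr2.
  by field.
have sB : sin (b + b) = cos b by rewrite sinD hs.

have t1 : 0 < tan b by rewrite /tan s2 divr_gt0.
have t2 : tan b ^+ 2 = 3^-1 by rewrite /tan s2 expr_div_n cb2; field.
have t3 : tan (b + b) = 3 * tan b.
  rewrite /tan sB cB s2.
  move: (cos b) cn cb2 => c cn cb2.
  apply: (@mulfI _ c) => //.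
  have -> : c * (3 * (2^-1 / c)) = 3 / 2 by field.
  have -> : c * (c / 2^-1) = 2 * c ^+ 2 by rewrite expr2; field.
  rewrite cb2; by field.
by [].
Qed.

Lemma notSF : ~ skew_le (@F_Frechet R) (@F_absCauchy R).
Proof.
move=> H.
set a := ln 3 : R; set b := ln 2 : R.
have b0 : 0 < b by apply: ln_gt0; rewrite ltr1n.
have ab : b < a by rewrite ltr_ln ?posrE // ltr_nat.
have a0 : 0 < a by lra.
have h3 : (3:R) ^+ 5 < 2 ^+ 8 by rewrite -!natrX ltr_nat.
have a85 : 5 * a < 8 * b.
  have p3 : (3:R) ^+ 5 \is Num.pos by rewrite posrE exprn_gt0 // ltr0n.
  have p2 : (2:R) ^+ 8 \is Num.pos by rewrite posrE exprn_gt0 // ltr0n.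
  have h : ln (3 ^+ 5) < ln (2 ^+ 8 : R) by rewrite (ltr_ln p3 p2).
  rewrite (lnXn 5 (_ : (0:R) < 3)) ?ltr0n // (lnXn 8 (_ : (0:R) < 2)) ?ltr0n // in h.
  rewrite -[ln 3 *+ 5]mulr_natl -[ln 2 *+ 8]mulr_natl in h.
  exact: h.
set c := a - b.
have c0 : 0 < c by rewrite subr_gt0.
have e3 : expR a = 3 by rewrite lnK // posrE ltr0n.
have e2 : expR b = 2 by rewrite lnK // posrE ltr0n.
have F1 : F_Frechet a^-1 = 3^-1 by rewrite /F_Frechet invr_gt0 a0 invrK expRN e3.
have F2 : F_Frechet b^-1 = 2^-1 by rewrite /F_Frechet invr_gt0 b0 invrK expRN e2.
have F3 : F_Frechet c^-1 = 2 / 3.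
  by rewrite /F_Frechet invr_gt0 c0 invrK /c opprB expRD expRN e2 e3.
have cE : c = a - b by [].
clearbody a b c.
set t := (c^-1 - b^-1) / (c^-1 - a^-1).
have an : a != 0 by rewrite gt_eqF.
have bn : b != 0 by rewrite gt_eqF.
have cn : c != 0 by rewrite gt_eqF.
have dn : c^-1 - a^-1 != 0.
  have -> : c^-1 - a^-1 = b / (a * c).
    by rewrite cE; field; rewrite -cE cn an.
  by rewrite mulf_neq0 // invr_neq0 // mulf_neq0.
have tE : t = a * (2 * b - a) / b ^+ 2.
  by rewrite /t cE; field; rewrite -cE cn an bn.
have mid : t * a^-1 + (1 - t) * c^-1 = b^-1.
  rewrite /t; field.
  have -> : a + -1 * c = b by rewrite cE; ring.
  by rewrite bn cn an.
have b2 : 0 < b ^+ 2 by rewrite exprn_gt0.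
have tlo : 16 / 25 < t.
  rewrite tE ltr_pdivlMr //; rewrite expr2; nra.
have thi : t <= 1.
  rewrite tE ler_pdivrMr //; rewrite expr2; nra.
have := H a^-1 c^-1 t.
rewrite mid F1 F2 F3 !ginvF; try lra.
have t0 : 0 <= t <= 1 by apply/andP; split; lra.
move=> h; have {h} := h _ _ t0 _; try lra.
case: tan_facts => p0 [p2 [p3 p4]].
rewrite p3 p4 => h.
have : 1 <= tan (3^-1 * (pi / 2)) * (3 - 2 * t) by lra.
move: p0 p2; move: (tan _) => p p0 p2 h'.
have hp : p * (3 - 2 * t) <= p * (43 / 25) by rewrite ler_pM2l //; lra.
have : (p * (43/25)) ^+ 2 < 1 by rewrite exprMn p2; lra.
rewrite expr2; nra.
Qed.

Lemma distF : distribution_function (@F_absCauchy R).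
Proof.
have pi0 := @pi_gt0 R.
have k0 : 0 < 2 / pi :> R by rewrite divr_gt0.
split.
- move=> x y xy; rewrite /F_absCauchy.
  case: (leP 0 x) => x0.
    rewrite (le_trans x0 xy) ler_pM2l //; exact: le_atan.
  case: ifP => // y0; rewrite mulr_ge0 ?(ltW k0) //.
  by rewrite -atan0 le_atan.
- move=> x; case: (leP 0 x) => x0.
  + have heq : {near x^'+, (fun y => 2 / pi * atan y) =1 @F_absCauchy R}.
      near=> y; rewrite /F_absCauchy ifT //.
      apply: le_trans x0 (ltW _); near: y; exact: nbhs_right_gt.
    apply: cvg_trans (near_eq_cvg heq) _.
    rewrite /F_absCauchy ifT //; apply: cvg_at_right_filter.
    exact: (cvgMl_tmp (a := 2 / pi) (@continuous_atan R x)).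
  + apply: cvg_near_cst; near=> y.
    rewrite /F_absCauchy !ifF //; first by apply/negbTE; rewrite -ltNge.
    apply/negbTE; rewrite -ltNge; near: y; exact: nbhs_right_lt.
- apply: cvg_near_cst; near=> y.
  rewrite /F_absCauchy ifF //; apply/negbTE; rewrite -ltNge.
  near: y; exact: nbhs_ninfty_lt.
- have heq : {near +oo, (fun y => 2 / pi * atan y) =1 @F_absCauchy R}.
    near=> y; rewrite /F_absCauchy ifT //.
  apply: cvg_trans (near_eq_cvg heq) _.
  have e : 2 / pi * (pi / 2) = 1 :> R by move: (pi : R) pi0 => p p0; field; exact: lt0r_neq0.
  have h := cvgMl_tmp (a := 2 / pi) (@cvgy_atan R).
  rewrite e in h; exact: h.
Unshelve. all: by end_near.
Qed.

Lemma FC_bounds (z : R) : 0 < F_Cauchy z < 1.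
Proof.
have pi0 := @pi_gt0 R.
have h1 := atan_gtNpi2 z; have h2 := atan_ltpi2 z.
rewrite /F_Cauchy; apply/andP; split.
- have : - (1/2) < pi^-1 * atan z.
    rewrite -ltr_pdivrMl ?invr_gt0 // invrK; lra.
  lra.
- have : pi^-1 * atan z < 1/2.
    rewrite -ltr_pdivlMl ?invr_gt0 // invrK; lra.
  lra.
Qed.

Lemma ginvC (z : R) : ginv (@F_absCauchy R) (F_Cauchy z) = z + Num.sqrt (1 + z ^+ 2).
Proof.
have pi0 := @pi_gt0 R.
rewrite ginvF ?FC_bounds //.
set al := F_Cauchy z * (pi / 2).
set th := atan z.
have e : al + al = th + pi / 2.
  rewrite /al /F_Cauchy -/th; move: (pi : R) pi0 => p p0; field; exact: lt0r_neq0.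
have alI : - (pi / 2) < al < pi / 2.
  have := FC_bounds z; rewrite /al; move: (F_Cauchy z) => u /andP[u0 u1].
  have := pi2_gt0; move: (pi / 2 : R) => q q0.
  apply/andP; split; nra.
have v0 : 0 < cos al by exact: cos_gt0_pihalf.
have hS : sin (al + al) = cos th by rewrite e sinDpihalf.
have hC : cos (al + al) = - sin th by rewrite e cosDpihalf.
rewrite sinD in hS; rewrite cosD in hC.
have hp := cos2Dsin2 al.
set s := Num.sqrt (1 + z ^+ 2).
have s0 : 0 < s by rewrite sqrtr_gt0; have := sqr_ge0 z; lra.
have s2 : s ^+ 2 = 1 + z ^+ 2 by rewrite sqr_sqrtr // addr_ge0 // sqr_ge0.
have cth : cos th = s^-1 by rewrite /th cos_atan.
have sth : sin th = z / s.
  have := atanK z; rewrite -/th /tan cth => h.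
  by rewrite -h; field; exact: lt0r_neq0.
rewrite /tan.
move: hS hC hp v0; rewrite cth sth.
move: (sin al) (cos al) => u v hS hC hp v0.
have szp : 0 < s - z.
  have : z < s by nra.
  lra.
have key : u / v = (s^-1) / (1 - z / s).
  have vn : v != 0 by rewrite gt_eqF.
  have -> : 1 - z / s = 2 * v ^+ 2.
    rewrite expr2; lra.
  rewrite -hS; field; exact: vn.
rewrite key.
have -> : s^-1 / (1 - z / s) = (s - z)^-1.
  field; rewrite !gt_eqF //.
apply: (@mulfI _ (s - z)); first by rewrite gt_eqF.
rewrite divff ?gt_eqF //.
have : (s - z) * (z + s) = s ^+ 2 - z ^+ 2 by ring.
rewrite s2 => ->; ring.
Qed.

Lemma skewC : skew_le (@F_Cauchy R) (@F_absCauchy R).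
Proof.
move=> x y t _ _ /andP[t0 t1] _; rewrite !ginvC.
set m := t * x + (1 - t) * y.
set A := Num.sqrt (1 + x ^+ 2); set B := Num.sqrt (1 + y ^+ 2).
set M := Num.sqrt (1 + m ^+ 2).
have pos u : 0 <= 1 + u ^+ 2 :> R by rewrite addr_ge0 // sqr_ge0.
have A0 : 0 <= A by exact: sqrtr_ge0.
have B0 : 0 <= B by exact: sqrtr_ge0.
have M0 : 0 <= M by exact: sqrtr_ge0.
have A2 : A ^+ 2 = 1 + x ^+ 2 by rewrite sqr_sqrtr.
have B2 : B ^+ 2 = 1 + y ^+ 2 by rewrite sqr_sqrtr.
have M2 : M ^+ 2 = 1 + m ^+ 2 by rewrite sqr_sqrtr.
have AB : 1 + x * y <= A * B.
  have h : (1 + x * y) ^+ 2 <= (A * B) ^+ 2.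
    rewrite exprMn A2 B2; have := sqr_ge0 (x - y); rewrite !expr2 => h; nra.
  have AB0 : 0 <= A * B by exact: mulr_ge0.
  move: h; rewrite !expr2 => h; nra.
set W := t * A + (1 - t) * B.
have W0 : 0 <= W by rewrite addr_ge0 // mulr_ge0 // subr_ge0.
have MW : M ^+ 2 <= W ^+ 2.
  rewrite M2 /W /m.
  have e : (t * A + (1 - t) * B) ^+ 2 = t ^+ 2 * A ^+ 2 + (1 - t) ^+ 2 * B ^+ 2 + 2 * t * (1 - t) * (A * B) by ring.
  rewrite e A2 B2.
  have tt : 0 <= 2 * t * (1 - t) by rewrite mulr_ge0 ?mulr_ge0 // subr_ge0.
  have := ler_wpM2l tt AB.
  have id : 1 + (t * x + (1 - t) * y) ^+ 2 = t ^+ 2 * (1 + x ^+ 2) + (1 - t) ^+ 2 * (1 + y ^+ 2) + 2 * t * (1 - t) * (1 + x * y) by ring.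
  rewrite id lerD2l; exact.
have : M <= W by rewrite -(ler_pXn2r (n := 2)) // nnegrE.
rewrite /W /m => h.
have -> : t * (x + A) + (1 - t) * (y + B) = (t * x + (1 - t) * y) + (t * A + (1 - t) * B) by ring.
by rewrite lerD2l.
Qed.
End S.

Theorem mainTheorem8 (R : realType) :
  S_C (@F_absCauchy R) /\ ~ S_F (@F_absCauchy R).
Proof.
split.
- by split; [exact: distF | exact: skewC].
- by case=> _; exact: notSF.
Qed.
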